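(* If $G\curvearrowright X$ and $H\curvearrowright Y$ are group actions with $\mathrm{Con}(G\curvearrowright X)=\mathrm{Con}(H\curvearrowright Y)$, then $\tau(G\curvearrowright X)=\tau(H\curvearrowright Y)$.
   Context: For an action $G\curvearrowright X$, an ordered tuple $\mathfrak{g}=(g_1,\dots,g_n)$ of elements of $G$ and a finite partition $\mathcal{E}=\{E_1,\dots,E_m\}$ of $X$ (a configuration pair), a configuration is a tuple $C=(C_0,\dots,C_n)\in\{1,\dots,m\}^{n+1}$ such that some $x\in E_{C_0}$ satisfies $g_i\cdot x\in E_{C_i}$ for $i=1,\dots,n$; the set of these is $\mathrm{Con}(\mathfrak{g},\mathcal{E};X)$, and $\mathrm{Con}(G\curvearrowright X)=\{\mathrm{Con}(\mathfrak{g},\mathcal{E};X): (\mathfrak{g},\mathcal{E})\text{ a configuration pair}\}$. Two actions with equal such collections are called configuration equivalent. A paradoxical decomposition of $G\curvearrowright X$ consists of pairwise disjoint subsets $A_1,\dots,A_n,B_1,\dots,B_m$ of $X$ and elements $g_1,\dots,g_n,h_1,\dots,h_m\in G$ with $X=\bigcup_{i=1}^n g_iA_i=\bigcup_{j=1}^m h_jB_j$. The Tarski number $\tau(G\curvearrowright X)$ is the minimal number of pieces $n+m$ in such a decomposition, and $\infty$ if none exists. *)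

(* Defs.v *)
From mathcomp Require Import all_boot.
From mathcomp Require Import boolp.

Set Implicit Arguments.
Unset Strict Implicit.
Unset Printing Implicit Defensive.

Record group_action (G X : Type) := GroupAction {
  gmul : G -> G -> G;
  gone : G;
  ginv : G -> G;
  act  : G -> X -> X;
  gmulA : forall a b c, gmul a (gmul b c) = gmul (gmul a b) c;
  gmul1 : forall a, gmul gone a = a;
  gmulV : forall a, gmul (ginv a) a = gone;
  act1 : forall x, act gone x = x;
  actM : forall a b x, act (gmul a b) x = act a (act b x)
}.

Section Defs.
Variables (G X : Type) (A : group_action G X).

(* A finite partition {E_0,...,E_(m-1)} of X is encoded by the labelling
   c : X -> 'I_m (x \in E_k iff c x = k); pieces are nonempty, i.e. c is onto. *)
Definition is_partition (m : nat) (c : X -> 'I_m) : Prop :=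
  forall k : 'I_m, exists x, c x = k.

(* Con(g, E; X): the set of configurations, a configuration
   (C_0,...,C_n) being encoded as the list [:: C_0; ...; C_n] of labels. *)
Definition Con (n m : nat) (g : 'I_n -> G) (c : X -> 'I_m) : seq nat -> Prop :=
  fun s => exists x : X,
    s = nat_of_ord (c x) :: [seq nat_of_ord (c (act A (g i) x)) | i <- enum 'I_n].

Definition ConAct (S : seq nat -> Prop) : Prop :=
  exists (n m : nat) (g : 'I_n -> G) (c : X -> 'I_m),
    is_partition c /\ forall s, S s <-> Con g c s.

Definition paradoxical (n m : nat) : Prop :=
  exists (P : 'I_n -> X -> Prop) (Q : 'I_m -> X -> Prop)
         (g : 'I_n -> G) (h : 'I_m -> G),
    (forall i i' x, i <> i' -> P i x -> P i' x -> False) /\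
    (forall j j' x, j <> j' -> Q j x -> Q j' x -> False) /\
    (forall i j x, P i x -> Q j x -> False) /\
    (forall x, exists i y, P i y /\ x = act A (g i) y) /\
    (forall x, exists j y, Q j y /\ x = act A (h j) y).

Definition has_paradox_with (k : nat) : Prop :=
  exists n m, n + m = k /\ paradoxical n m.

Lemma tarski_ex (H : exists k, has_paradox_with k) :
  exists k, `[< has_paradox_with k >].
Proof. by case: H => k Hk; exists k; apply/asboolP. Qed.

(* Tarski number: Some k with k the minimal number of pieces,
   None standing for infinity (no paradoxical decomposition). *)
Definition tarski : option nat :=
  match pselect (exists k, has_paradox_with k) with
  | left H => Some (ex_minn (tarski_ex H))
  | right _ => None
  end.

End Defs.

(* Main.v *)
Require Import Defs.
From mathcomp Require Import all_boot.
From mathcomp Require Import boolp.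

Set Implicit Arguments.
Unset Strict Implicit.
Unset Printing Implicit Defensive.

Lemma compress (X : Type) (T : finType) (c : X -> T) :
  exists k (c' : X -> 'I_k) (e : 'I_k -> T),
    is_partition c' /\ forall x, c x = e (c' x).
Proof.
case: (pselect (inhabited X)) => [[x0]|N].
  pose S : {set T} := [set t | `[< exists x, c x = t >]].
  have Hx0 : c x0 \in S by rewrite inE; apply/asboolP; exists x0.
  have HS : forall x, c x \in S by move=> x; rewrite inE; apply/asboolP; exists x.
  exists #|S|, (fun x => enum_rank_in Hx0 (c x)), enum_val; split.
    move=> o; have := enum_valP o; rewrite inE => /asboolP [x Hx].
    by exists x; rewrite Hx enum_valK_in.
  by move=> x; rewrite enum_rankK_in.
have c' : X -> 'I_0 by move=> x; exfalso; apply: N; constructor.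
have e0 : 'I_0 -> T by case.
exists 0, c', e0; split; first by case.
by move=> x; exfalso; apply: N; constructor.
Qed.

Lemma nth_enum_map (n : nat) (F : 'I_n -> nat) (l : 'I_n) :
  nth 0 [seq F o | o <- enum 'I_n] l = F l.
Proof. by rewrite (nth_map l) ?size_enum_ord ?ltn_ord // nth_ord_enum. Qed.

Lemma nth_con_map (n : nat) (a : nat) (F : 'I_n -> nat) (l : 'I_n) :
  nth 0 (a :: [seq F o | o <- enum 'I_n]) (nat_of_ord l).+1 = F l.
Proof. exact: nth_enum_map. Qed.

Lemma empty_par (H Y : Type) (B : group_action H Y) n m :
  ~ inhabited Y -> paradoxical B n m.
Proof.
move=> N.
exists (fun _ _ => False), (fun _ _ => False), (fun _ => gone B), (fun _ => gone B).
do 3!split => //.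
by split=> x; exfalso; apply: N; constructor.
Qed.

Lemma main_dir (G X H Y : Type) (A : group_action G X) (B : group_action H Y) n m :
  (forall S : seq nat -> Prop, ConAct A S -> ConAct B S) ->
  paradoxical A n m -> paradoxical B n m.
Proof.
move=> HAB [P [Q [g [h [dP [dQ [dPQ [cP cQ]]]]]]]].
pose lab (x : X) : option ('I_n + 'I_m) :=
  if [pick i | `[< P i x >]] is Some i then Some (inl i)
  else if [pick j | `[< Q j x >]] is Some j then Some (inr j) else None.
have labP : forall i x, P i x -> lab x = Some (inl i).
  move=> i x Pix; rewrite /lab; case: pickP => [i' /asboolP Pi'|/(_ i) /asboolP //].
  case: (eqVneq i' i) => [->//|ne]; exfalso; exact: (dP _ _ _ (elimT eqP ne) Pi' Pix) || (by apply: (dP i' i x) => // E; rewrite E eqxx in ne).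
have labQ : forall j x, Q j x -> lab x = Some (inr j).
  move=> j x Qjx; rewrite /lab; case: pickP => [i' /asboolP Pi'|_].
    by exfalso; exact: (dPQ _ _ _ Pi' Qjx).
  case: pickP => [j' /asboolP Qj'|/(_ j) /asboolP //].
  case: (eqVneq j' j) => [->//|ne]; exfalso; apply: (dQ j' j x) => // E.
  by rewrite E eqxx in ne.
have [k [c' [e [onc' Hce]]]] := compress lab.
pose gg (o : 'I_(n + m)) : G :=
  match split o with inl i => ginv A (g i) | inr j => ginv A (h j) end.
have actK : forall a x, act A (ginv A a) (act A a x) = x.
  by move=> a x; rewrite -actM gmulV act1.
have actKB : forall a y, act B (ginv B a) (act B a y) = y.
  by move=> a y; rewrite -actM gmulV act1.
have [n' [m' [g' [c'' [onc'' Heq]]]]] := HAB _ (ex_intro _ (n + m) (ex_intro _ k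
   (ex_intro _ gg (ex_intro _ c' (conj onc' (fun s => iff_refl (Con A gg c' s))))))).
case: (pselect (inhabited Y)) => [[y0]|N]; last exact: empty_par.
pose sB (y : Y) := nat_of_ord (c'' y) :: [seq nat_of_ord (c'' (act B (g' i) y)) | i <- enum 'I_n'].
have HsB : forall y, exists x, sB y = nat_of_ord (c' x) :: [seq nat_of_ord (c' (act A (gg i) x)) | i <- enum 'I_(n + m)].
  by move=> y; apply/Heq; exists y.
have En' : n' = n + m.
  have [x Hx] := HsB y0.
  rewrite /sB in Hx; case: Hx => _ Hm.
  by have := congr1 size Hm; rewrite !size_map -!enumT !size_enum_ord.
pose F (l : nat) : option ('I_n + 'I_m) := odflt None (omap e (insub l : option 'I_k)).
have FK : forall o : 'I_k, F o = e o by move=> o; rewrite /F valK.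
pose hB (l : nat) : H := if (insub l : option 'I_n') is Some o then g' o else gone B.
have hBK : forall o : 'I_n', hB o = g' o by move=> o; rewrite /hB valK.
pose P' (i : 'I_n) (y : Y) := F (c'' y) = Some (inl i).
pose Q' (j : 'I_m) (y : Y) := F (c'' y) = Some (inr j).
exists P', Q', (fun i => ginv B (hB i)), (fun j => ginv B (hB (n + j))).
split; first by move=> i i' y ne; rewrite /P' => -> [] E; apply: ne.
split; first by move=> j j' y ne; rewrite /Q' => -> [] E; apply: ne.
split; first by move=> i j y; rewrite /P' /Q' => E; rewrite /Q' E.
split.
  move=> y; have [x Hx] := HsB y.
  have [i [z [Piz Ex]]] := cP x; subst x.
  have ltin : i < n' by rewrite En' ltn_addr.
  exists i, (act B (hB i) y); split; last first.
    by rewrite (actKB (hB i) y).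
  have := congr1 (fun s => nth 0 s (Ordinal ltin).+1) Hx.
  cbv beta; rewrite /sB (nth_con_map _ _ (Ordinal ltin)) (hBK (Ordinal ltin) : hB _ = _) (nth_con_map _ _ (lshift m i)) => E; rewrite /P' E.
  rewrite /P' /= FK -Hce /gg (unsplitK (inl i) : split (lshift m i) = inl i) actK.
  exact: labP.
move=> y; have [x Hx] := HsB y.
have [j [z [Qjz Ex]]] := cQ x; subst x.
have ltin : n + j < n' by rewrite En' ltn_add2l.
exists j, (act B (hB (n + j)) y); split; last first.
  by rewrite (actKB (hB (n + j)) y).
have := congr1 (fun s => nth 0 s (Ordinal ltin).+1) Hx.
cbv beta; rewrite /sB (nth_con_map _ _ (Ordinal ltin)) (hBK (Ordinal ltin) : hB _ = _) (nth_con_map _ _ (rshift n j)) => E; rewrite /Q' E.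
rewrite /Q' /= FK -Hce /gg (unsplitK (inr j) : split (rshift n j) = inr j) actK.
exact: labQ.
Qed.

Theorem mainTheorem7 (G X H Y : Type) (A : group_action G X) (B : group_action H Y) :
  (forall S : seq nat -> Prop, ConAct A S <-> ConAct B S) ->
  tarski A = tarski B.
Proof.
move=> HS.
have E : forall k, has_paradox_with A k <-> has_paradox_with B k.
  move=> k; split=> -[n [m [Hk Hp]]]; exists n, m; split=> //.
    by apply: main_dir Hp => S /HS.
  by apply: main_dir Hp => S /HS.
rewrite /tarski; case: pselect => HA; case: pselect => HB.
- congr Some.
  case: ex_minnP => a /asboolP Ha Hma; case: ex_minnP => b /asboolP Hb Hmb.
  apply/eqP; rewrite eqn_leq Hma ?Hmb //; apply/asboolP; by apply/E.
- by exfalso; apply: HB; case: HA => k /E; exists k.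
- by exfalso; apply: HA; case: HB => k /E; exists k.
- by [].
Qed.
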